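(* For any simple undirected graph $G$ with $n$ vertices and $m$ edges, $$n_G(\mathcal{L}_4)=\sum_{\{st,uv\}\in Q}(a_{su}+a_{sv}+a_{tu}+a_{tv})=\frac12\sum_{s=1}^n\sum_{t\ne s}\big(a^{(3)}_{st}-a_{st}(2k_t-1)\big)=m_3+m_1-n\langle k^2\rangle .$$
   Context: $A=(a_{ij})$ is the adjacency matrix, $A^p=(a^{(p)}_{ij})$ its $p$-th power, $m_p=\sum_{s<t}a^{(p)}_{st}$ (so $m_1=m$), $k_s$ the degree of $s$, $\langle k^2\rangle=\frac1n\sum_s k_s^2$. $Q$ is the set of unordered pairs $\{st,uv\}$ of edges $st,uv\in E$ with $s,t,u,v$ pairwise distinct. $n_G(F)$ is the number of (not necessarily induced) subgraphs of $G$ isomorphic to $F$; $\mathcal{L}_4$ is the path on 4 vertices. *)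

(* Defs.v *)
From HB Require Import structures.
From mathcomp Require Import all_boot all_order all_algebra.
Set Implicit Arguments. Unset Strict Implicit. Unset Printing Implicit Defensive.
Import Order.TTheory GRing.Theory Num.Theory.
Local Open Scope ring_scope.

Definition simple_graph (U : finType) (e : rel U) : Prop :=
  irreflexive e /\ symmetric e.

Section Graph.
Variables (n : nat) (e : rel 'I_n).

Definition edges : {set {set 'I_n}} :=
  [set E : {set 'I_n} | [exists s, exists t, (E == [set s; t]) && e s t]].

Definition adj : 'M[rat]_n := \matrix_(i, j) (e i j)%:R.

Definition deg (s : 'I_n) : nat := #|[set t | e s t]|.

Definition m_p (p : nat) : rat :=
  \sum_(s : 'I_n) \sum_(t : 'I_n | (s < t)%N) ((adj ^+ p) s t).

Definition avg_k2 : rat := (\sum_(s : 'I_n) ((deg s) ^ 2)%:R) / n%:R.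

(* Q: unordered pairs {st, uv} of edges with s,t,u,v pairwise distinct,
   i.e. two-element sets of pairwise disjoint edges *)
Definition Qpairs : {set {set {set 'I_n}}} :=
  [set P : {set {set 'I_n}} | (P \subset edges) && (#|P| == 2)
     && [forall E1 in P, forall E2 in P, (E1 != E2) ==> [disjoint E1 & E2]]].

(* For P = {E1, E2} in Q with E1 = {s,t}, E2 = {u,v}:
   a_su + a_sv + a_tu + a_tv = sum_{x in E1} sum_{y in E2} a_xy.
   Summing over the two orderings (E1,E2), (E2,E1) of P counts this
   (symmetric) quantity twice, hence the factor 1/2. *)
Definition Qterm (P : {set {set 'I_n}}) : rat :=
  (\sum_(E1 in P) \sum_(E2 in P | E1 != E2)
      \sum_(x in E1) \sum_(y in E2) adj x y) / 2%:R.

(* n_G(F): number of (not necessarily induced) subgraphs (W, E') of G,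
   W a vertex set, E' a set of edges of G with endpoints in W,
   that are isomorphic to the graph F = (U, f). *)
Definition is_subgraph (p : {set 'I_n} * {set {set 'I_n}}) : bool :=
  (p.2 \subset edges) && [forall E in p.2, E \subset p.1].

Definition iso_to (U : finType) (f : rel U)
    (p : {set 'I_n} * {set {set 'I_n}}) : bool :=
  [exists phi : {ffun U -> 'I_n},
     injectiveb phi && (phi @: [set: U] == p.1) &&
     [forall u, forall v, f u v == ([set phi u; phi v] \in p.2)]].

Definition nG (U : finType) (f : rel U) : nat :=
  #|[set p : {set 'I_n} * {set {set 'I_n}} | is_subgraph p && iso_to f p]|.

End Graph.

Definition L4_rel : rel 'I_4 := fun i j => (i.+1 == j) || (j.+1 == i).

(* Main.v *)
Require Import Defs.
From HB Require Import structures.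
From mathcomp Require Import all_boot all_order all_algebra.
From mathcomp Require Import ring.
Import Order.TTheory GRing.Theory Num.Theory.
Local Open Scope ring_scope.
Set Implicit Arguments. Unset Strict Implicit. Unset Printing Implicit Defensive.

Lemma adjE n (e : rel 'I_n) i j : adj e i j = (e i j)%:R.
Proof. by rewrite mxE. Qed.

Lemma A3E n (e : rel 'I_n) s t :
  (adj e ^+ 3) s t = \sum_x \sum_y adj e s x * adj e x y * adj e y t.
Proof.
rewrite !exprSr expr0 mul1r -!mulmxE mxE.
under eq_bigr do rewrite mxE big_distrl /=.
rewrite exchange_big; apply: eq_bigr => x _; apply: eq_bigr => y _.
by [].
Qed.

Lemma degE n (e : rel 'I_n) s : (deg e s)%:R = \sum_t adj e s t :> rat.
Proof.
rewrite /deg -sum1_card natr_sum big_mkcond /=; apply: eq_bigr => t _.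
by rewrite inE adjE; case: (e s t).
Qed.

Lemma sum_ind n (s : 'I_n) (G : 'I_n -> rat) : \sum_y (s == y)%:R * G y = G s.
Proof.
rewrite (bigD1 s) //= eqxx mul1r big1 ?addr0 // => y /negbTE.
by rewrite eq_sym => ->; rewrite mul0r.
Qed.

Lemma sum_ind' n (s : 'I_n) (G : 'I_n -> rat) : \sum_y (y == s)%:R * G y = G s.
Proof. by rewrite -(sum_ind s G); apply: eq_bigr => y _; rewrite eq_sym. Qed.

Definition P4 n (e : rel 'I_n) a b c d : bool :=
  [&& e a b, e b c, e c d, a != c, a != d & b != d].

Lemma walk_pt n (e : rel 'I_n) (irr : irreflexive e) (sym : symmetric e) s x y t :
  (s != t)%:R * (adj e s x * adj e x y * adj e y t) =
  (P4 e s x y t)%:R + (s == y)%:R * adj e s x * adj e s t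
  + (x == t)%:R * adj e s t * adj e t y
  - (s == y)%:R * (x == t)%:R * adj e s t :> rat.
Proof.
rewrite !adjE /P4.
case: (eqVneq s t) => [<-|nst].
  by rewrite irr !andbF /=; ring.
case: (eqVneq s y) => [<-|nsy].
  rewrite /= andbF.
  case: (eqVneq x t) => [->|nxt].
    by rewrite (sym t s); case: (e s t); rewrite /= ?mulr0; ring.
  by rewrite (sym x s); case: (e s x); case: (e s t); rewrite /=; ring.
case: (eqVneq x t) => [->|nxt].
  by rewrite /= !andbF (sym y t); case: (e s t); case: (e t y); rewrite /=; ring.
by rewrite /=; case: (e s x); case: (e x y); case: (e y t); rewrite /=; ring.
Qed.

Lemma sum4_lin n (F1 F2 F3 F4 G : 'I_n -> 'I_n -> 'I_n -> 'I_n -> rat) :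
  (forall s x y t, G s x y t = F1 s x y t + F2 s x y t + F3 s x y t - F4 s x y t) ->
  \sum_s \sum_x \sum_y \sum_t G s x y t =
  \sum_s \sum_x \sum_y \sum_t F1 s x y t + \sum_s \sum_x \sum_y \sum_t F2 s x y t
  + \sum_s \sum_x \sum_y \sum_t F3 s x y t - \sum_s \sum_x \sum_y \sum_t F4 s x y t.
Proof.
move=> H.
rewrite -!big_split -sumrB; apply: eq_bigr => s _.
rewrite -!big_split -sumrB; apply: eq_bigr => x _.
rewrite -!big_split -sumrB; apply: eq_bigr => y _.
rewrite -!big_split -sumrB; apply: eq_bigr => t _.
exact: H.
Qed.

Definition Ncnt n (e : rel 'I_n) : rat :=
  \sum_a \sum_b \sum_c \sum_d (P4 e a b c d)%:R.

Definition kk n (e : rel 'I_n) s : rat := \sum_t adj e s t.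

Lemma adj_sym n (e : rel 'I_n) (sym : symmetric e) s t : adj e s t = adj e t s.
Proof. by rewrite !adjE sym. Qed.

Lemma adj_diag n (e : rel 'I_n) (irr : irreflexive e) s : adj e s s = 0.
Proof. by rewrite adjE irr. Qed.

Lemma kk_sym n (e : rel 'I_n) (sym : symmetric e) t : \sum_s adj e s t = kk e t.
Proof. by apply: eq_bigr => s _; rewrite adj_sym. Qed.

Lemma walks n (e : rel 'I_n) (irr : irreflexive e) (sym : symmetric e) :
  \sum_s \sum_(t | t != s) (adj e ^+ 3) s t =
  Ncnt e + \sum_s kk e s * kk e s + \sum_s kk e s * kk e s - \sum_s kk e s.
Proof.
have -> : \sum_s \sum_(t | t != s) (adj e ^+ 3) s t =
  \sum_s \sum_x \sum_y \sum_t (s != t)%:R * (adj e s x * adj e x y * adj e y t).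
  apply: eq_bigr => s _; rewrite big_mkcond /=.
  have E t : (if t != s then (adj e ^+ 3) s t else 0) =
     (s != t)%:R * \sum_x \sum_y adj e s x * adj e x y * adj e y t.
    by rewrite A3E eq_sym; case: (s != t); rewrite ?mul1r ?mul0r.
  under eq_bigr => t _ do rewrite E big_distrr.
  rewrite exchange_big; apply: eq_bigr => x _ /=.
  under eq_bigr => t _ do rewrite big_distrr.
  rewrite exchange_big; apply: eq_bigr => y _ /=.
  apply: eq_bigr => t _; by rewrite mulrA.
rewrite (sum4_lin (walk_pt irr sym)).
congr (_ + _ + _ - _).
- rewrite /kk; apply: eq_bigr => s _.
  under eq_bigr => x _ do under eq_bigr => y _ do rewrite -big_distrr /= -mulrA.
  under eq_bigr => x _ do rewrite sum_ind.
  by rewrite -big_distrl.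
- under eq_bigr => s _ do under eq_bigr => x _ do under eq_bigr => y _ do
    under eq_bigr => t _ do rewrite -mulrA.
  under eq_bigr => s _ do under eq_bigr => x _ do under eq_bigr => y _ do rewrite sum_ind.
  under eq_bigr => s _ do under eq_bigr => x _ do rewrite -big_distrr /=.
  rewrite exchange_big; apply: eq_bigr => x _ /=.
  by rewrite -big_distrl /= kk_sym.
- under eq_bigr => s _ do under eq_bigr => x _ do under eq_bigr => y _ do
    under eq_bigr => t _ do rewrite -mulrA mulrCA.
  under eq_bigr => s _ do under eq_bigr => x _ do under eq_bigr => y _ do rewrite sum_ind.
  under eq_bigr => s _ do under eq_bigr => x _ do rewrite sum_ind.
  by [].
Qed.

Lemma offdiag n (e : rel 'I_n) (irr : irreflexive e) s (f : 'I_n -> rat) :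
  \sum_(t | t != s) adj e s t * f t = \sum_t adj e s t * f t.
Proof.
rewrite big_mkcond /=; apply: eq_bigr => t _.
by case: (eqVneq t s) => [->|//]; rewrite adj_diag // mul0r.
Qed.

Lemma part3 n (e : rel 'I_n) (irr : irreflexive e) (sym : symmetric e) :
  \sum_(s : 'I_n) \sum_(t : 'I_n | t != s)
     ((adj e ^+ 3) s t - adj e s t * (2%:R * (deg e t)%:R - 1)) = Ncnt e.
Proof.
under eq_bigr => s _ do rewrite sumrB offdiag //.
rewrite sumrB walks //.
have -> : \sum_s \sum_t adj e s t * (2%:R * (deg e t)%:R - 1) =
    2%:R * \sum_s kk e s * kk e s - \sum_s kk e s.
  rewrite exchange_big mulr_sumr -sumrB; apply: eq_bigr => t _.
  by rewrite -big_distrl /= kk_sym // degE; rewrite -/(kk e t); ring.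
ring.
Qed.

Lemma sym_sum n (M : 'I_n -> 'I_n -> rat) (HM : forall s t, M s t = M t s) :
  \sum_(s : 'I_n) \sum_(t : 'I_n | t != s) M s t = 2%:R * \sum_(s : 'I_n) \sum_(t : 'I_n | (s < t)%N) M s t.
Proof.
have -> : \sum_(s : 'I_n) \sum_(t : 'I_n | t != s) M s t =
   \sum_(s : 'I_n) \sum_(t : 'I_n | (s < t)%N) M s t + \sum_(s : 'I_n) \sum_(t : 'I_n | (t < s)%N) M s t.
  rewrite -big_split; apply: eq_bigr => s _ /=.
  rewrite big_mkcond [X in _ = X + _]big_mkcond [X in _ = _ + X]big_mkcond -big_split.
  apply: eq_bigr => t _ /=.
  have -> : (t != s) = ((t : nat) != s) by [].
  by case: ltngtP; rewrite ?addr0 ?add0r.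
have -> : \sum_(s : 'I_n) \sum_(t : 'I_n | (t < s)%N) M s t = \sum_(s : 'I_n) \sum_(t : 'I_n | (s < t)%N) M s t.
  under eq_bigr do rewrite big_mkcond.
  rewrite exchange_big /=; symmetry.
  under eq_bigr do rewrite big_mkcond.
  apply: eq_bigr => s _; apply: eq_bigr => t _ /=; by rewrite HM.
by rewrite mulr_natl mulr2n.
Qed.

Lemma second n (e : rel 'I_n) (irr : irreflexive e) (sym : symmetric e) :
  \sum_(s : 'I_n) \sum_(t : 'I_n | t != s) adj e s t * (2%:R * (deg e t)%:R - 1) =
    2%:R * \sum_s kk e s * kk e s - \sum_s kk e s.
Proof.
under eq_bigr => s _ do rewrite offdiag //.
rewrite exchange_big mulr_sumr -sumrB; apply: eq_bigr => t _.
by rewrite -big_distrl /= kk_sym // degE; rewrite -/(kk e t); ring.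
Qed.

Lemma A3_sym n (e : rel 'I_n) (sym : symmetric e) s t :
  (adj e ^+ 3) s t = (adj e ^+ 3) t s.
Proof.
rewrite !A3E exchange_big; apply: eq_bigr => x _; apply: eq_bigr => y _.
rewrite (adj_sym sym s y) (adj_sym sym y x) (adj_sym sym x t); ring.
Qed.

Lemma K1E n (e : rel 'I_n) (irr : irreflexive e) (sym : symmetric e) :
  \sum_s kk e s = 2%:R * m_p e 1.
Proof.
rewrite /m_p expr1 -sym_sum; last by move=> s t; rewrite adj_sym.
apply: eq_bigr => s _; rewrite /kk.
have := offdiag irr s (fun _ => 1); rewrite /=.
under eq_bigr do rewrite mulr1.
by under [X in _ = X -> _]eq_bigr do rewrite mulr1.
Qed.

Lemma K2E n (e : rel 'I_n) :
  n%:R * avg_k2 e = \sum_s kk e s * kk e s.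
Proof.
rewrite /avg_k2.
have -> : \sum_(s : 'I_n) ((deg e s) ^ 2)%:R = \sum_s kk e s * kk e s.
  by apply: eq_bigr => s _; rewrite natrX degE expr2.
case: n e => [|n] e; first by rewrite big_ord0 mul0r.
by rewrite mulrC divfK // pnatr_eq0.
Qed.

Lemma part4 n (e : rel 'I_n) (irr : irreflexive e) (sym : symmetric e) :
  2%:R^-1 * \sum_(s : 'I_n) \sum_(t : 'I_n | t != s)
     ((adj e ^+ 3) s t - adj e s t * (2%:R * (deg e t)%:R - 1))
  = m_p e 3 + m_p e 1 - n%:R * avg_k2 e.
Proof.
under eq_bigr => s _ do rewrite sumrB.
rewrite sumrB second // K2E.
rewrite sym_sum; last by move=> s t; rewrite A3_sym.
rewrite K1E // -/(m_p e 3).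
by field.
Qed.
Lemma set2_eqP (T : finType) (a b s t : T) : s != t ->
  [set a; b] = [set s; t] -> (a = s /\ b = t) \/ (a = t /\ b = s).
Proof.
move=> nst E.
have ha : a \in [set s; t] by rewrite -E set21.
have hb : b \in [set s; t] by rewrite -E set22.
have hs : s \in [set a; b] by rewrite E set21.
have ht : t \in [set a; b] by rewrite E set22.
move: ha; rewrite !inE => /orP[]/eqP Ea; subst a.
  move: ht; rewrite !inE eq_sym (negbTE nst) /= => /eqP ->; by left.
move: hs; rewrite !inE (negbTE nst) /= => /eqP ->; by right.
Qed.

Lemma big_set2 (T : finType) (a b : T) (F : T -> rat) : a != b ->
  \sum_(X in [set a; b]) F X = F a + F b.
Proof.
by move=> nab; rewrite big_setU1 /= ?big_set1 ?inE.
Qed.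

Definition pairs (T : finType) (r : rel T) : {set {set T}} :=
  [set S : {set T} | [exists a, exists b, (S == [set a; b]) && r a b]].

Lemma pair_sum (T : finType) (r : rel T) (sym : symmetric r) (irr : irreflexive r)
  (g : {set T} -> rat) :
  \sum_(S in pairs r) g S *+ 2 = \sum_a \sum_(b | r a b) g [set a; b].
Proof.
rewrite pair_big_dep /=.
rewrite (partition_big (fun x : T * T => [set x.1; x.2]) (mem (pairs r))) /=; last first.
  move=> [a b] /= rab; rewrite inE; apply/existsP; exists a; apply/existsP; exists b.
  by rewrite eqxx rab.
apply: eq_bigr => S; rewrite inE => /existsP [s /existsP [t /andP [/eqP ES rst]]].
have nst : s != t by apply: contraTneq rst => ->; rewrite irr.
transitivity (\sum_(x in [set (s, t); (t, s)]) g S).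
  rewrite sumr_const cards2.
  have -> : (s, t) != (t, s) by rewrite xpair_eqE negb_and nst.
  by [].
symmetry; apply: eq_big.
  move=> [a b] /=; rewrite !inE; apply/idP/idP.
    move=> /andP [rab /eqP E]; rewrite ES in E.
    by case: (set2_eqP nst E) => [[-> ->]|[-> ->]]; rewrite eqxx ?orbT.
  case/orP=> /eqP [-> ->]; first by rewrite rst ES eqxx.
  by rewrite sym rst ES setUC eqxx.
by move=> [a b] /= /andP [_ /eqP ->].
Qed.

Lemma disjP (T : finType) (A B : {set T}) :
  reflect (forall x, x \in A -> x \in B -> False) [disjoint A & B].
Proof.
rewrite disjoint_subset; apply: (iffP subsetP) => H x hA.
  by move=> hB; move: (H x hA); rewrite !inE hB.
by rewrite !inE; apply/negP => /(H x hA).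
Qed.

Lemma disj2 (T : finType) (a b c d : T) :
  [disjoint [set a; b] & [set c; d]] = [&& a != c, a != d, b != c & b != d].
Proof.
apply/disjP/idP.
  move=> H; apply/and4P; split; apply/negP => /eqP E; subst.
  - by apply: (H c); rewrite !inE eqxx.
  - by apply: (H d); rewrite !inE eqxx ?orbT.
  - by apply: (H c); rewrite !inE eqxx ?orbT.
  - by apply: (H d); rewrite !inE eqxx ?orbT.
case/and4P => h1 h2 h3 h4 x; rewrite !inE.
by case/orP=> /eqP ->; case/orP=> /eqP E; subst; rewrite eqxx in h1 h2 h3 h4.
Qed.

Lemma edges_pairs n (e : rel 'I_n) : edges e = pairs e.
Proof. by []. Qed.

Lemma edge_ndisj n (e : rel 'I_n) E : E \in edges e -> [disjoint E & E] = false.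
Proof.
rewrite inE => /existsP [s /existsP [t /andP [/eqP -> _]]].
by apply/negP => /disjP /(_ s); rewrite !inE eqxx => /(_ isT isT).
Qed.

Definition rQ n (e : rel 'I_n) : rel {set 'I_n} :=
  fun E1 E2 => [&& E1 \in edges e, E2 \in edges e & [disjoint E1 & E2]].

Lemma rQ_sym n (e : rel 'I_n) : symmetric (rQ e).
Proof. by move=> E1 E2; rewrite /rQ disjoint_sym andbCA. Qed.

Lemma rQ_irr n (e : rel 'I_n) : irreflexive (rQ e).
Proof. by move=> E; rewrite /rQ; case h : (E \in edges e) => //=; rewrite (edge_ndisj h). Qed.

Lemma Qpairs_eq n (e : rel 'I_n) : Qpairs e = pairs (rQ e).
Proof.
apply/setP => P; rewrite !inE; apply/idP/idP.
  case/andP => /andP [sub /cards2P [x [y [nxy EP]]]] fa.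
  apply/existsP; exists x; apply/existsP; exists y; rewrite EP eqxx /= /rQ.
  have hx : x \in P by rewrite EP set21.
  have hy : y \in P by rewrite EP set22.
  rewrite (subsetP sub x hx) (subsetP sub y hy) /=.
  by move: fa => /forallP /(_ x) /implyP /(_ hx) /forallP /(_ y) /implyP /(_ hy) /implyP /(_ nxy).
case/existsP => a /existsP [b /andP [/eqP EP]].
rewrite /rQ /= => /and3P [ha hb dab].
have nab : a != b by apply: contraTneq dab => ->; rewrite (edge_ndisj hb).
rewrite EP; apply/andP; split; first (apply/andP; split).
- by apply/subsetP => E /set2P [] ->.
- by rewrite cards2 nab.
apply/forallP => E1; apply/implyP; rewrite !inE => h1.
apply/forallP => E2; apply/implyP; rewrite !inE => h2; apply/implyP.
move: h1 h2 => /orP [] /eqP -> /orP [] /eqP ->; rewrite ?eqxx //= => _.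
by rewrite disjoint_sym.
Qed.

Definition FF n (e : rel 'I_n) (X Y : {set 'I_n}) : rat :=
  \sum_(x in X) \sum_(y in Y) adj e x y.

Lemma FF_sym n (e : rel 'I_n) (sym : symmetric e) X Y : FF e X Y = FF e Y X.
Proof.
rewrite /FF exchange_big; apply: eq_bigr => y _; apply: eq_bigr => x _.
exact: adj_sym.
Qed.

Lemma Qterm2 n (e : rel 'I_n) (sym : symmetric e) E1 E2 : E1 != E2 ->
  Qterm e [set E1; E2] = FF e E1 E2.
Proof.
move=> ne; rewrite /Qterm big_set2 //.
rewrite !big_mkcondr /= !big_set2 // !eqxx ne eq_sym ne /= add0r addr0.
rewrite -/(FF e E1 E2) -/(FF e E2 E1) (FF_sym sym E2 E1).
by field.
Qed.

Definition HH n (e : rel 'I_n) a b c d : rat :=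
  ([&& e a b, e c d, a != c, a != d, b != c & b != d])%:R.

Lemma HH_ab n (e : rel 'I_n) (sym : symmetric e) a b c d : HH e b a c d = HH e a b c d.
Proof.
rewrite /HH sym; case: (e a b) => //=; case: (e c d) => //=.
by case: (a != c); case: (a != d); case: (b != c); case: (b != d).
Qed.

Lemma HH_cd n (e : rel 'I_n) (sym : symmetric e) a b c d : HH e a b d c = HH e a b c d.
Proof.
rewrite /HH (sym d c); case: (e a b) => //=; case: (e c d) => //=.
by case: (a != c); case: (a != d); case: (b != c); case: (b != d).
Qed.

Lemma sum4_add4 n (F1 F2 F3 F4 : 'I_n -> 'I_n -> 'I_n -> 'I_n -> rat) :
  \sum_s \sum_x \sum_y \sum_t (F1 s x y t + F2 s x y t + F3 s x y t + F4 s x y t) =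
  \sum_s \sum_x \sum_y \sum_t F1 s x y t + \sum_s \sum_x \sum_y \sum_t F2 s x y t
  + \sum_s \sum_x \sum_y \sum_t F3 s x y t + \sum_s \sum_x \sum_y \sum_t F4 s x y t.
Proof.
rewrite -!big_split; apply: eq_bigr => s _.
rewrite -!big_split; apply: eq_bigr => x _.
rewrite -!big_split; apply: eq_bigr => y _.
by rewrite -!big_split.
Qed.

Lemma Tbc n (e : rel 'I_n) (irr : irreflexive e) :
  \sum_a \sum_b \sum_c \sum_d HH e a b c d * adj e b c = Ncnt e.
Proof.
apply: eq_bigr => a _; apply: eq_bigr => b _; apply: eq_bigr => c _; apply: eq_bigr => d _.
rewrite /HH /P4 adjE; case ebc : (e b c); rewrite ?mulr0 ?mulr1 /=.
  have nbc : b != c by apply: contraTneq ebc => ->; rewrite irr.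
  by rewrite nbc /=.
by rewrite !andbF.
Qed.

Lemma Q4 n (e : rel 'I_n) (irr : irreflexive e) (sym : symmetric e) :
  \sum_a \sum_b \sum_c \sum_d HH e a b c d *
     (adj e a c + adj e a d + adj e b c + adj e b d) = 4%:R * Ncnt e.
Proof.
under eq_bigr => a _ do under eq_bigr => b _ do under eq_bigr => c _ do
  under eq_bigr => d _ do rewrite !mulrDr.
rewrite sum4_add4.
have E1 : \sum_a \sum_b \sum_c \sum_d HH e a b c d * adj e a c = Ncnt e.
  rewrite exchange_big -(Tbc irr) /=.
  apply: eq_bigr => a _; apply: eq_bigr => b _; apply: eq_bigr => c _; apply: eq_bigr => d _.
  by rewrite HH_ab.
have E3 : \sum_a \sum_b \sum_c \sum_d HH e a b c d * adj e b d = Ncnt e.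
  rewrite -(Tbc irr); apply: eq_bigr => a _; apply: eq_bigr => b _.
  rewrite exchange_big /=; apply: eq_bigr => c _; apply: eq_bigr => d _.
  by rewrite HH_cd.
have E2 : \sum_a \sum_b \sum_c \sum_d HH e a b c d * adj e a d = Ncnt e.
  rewrite exchange_big -E3 /=.
  apply: eq_bigr => a _; apply: eq_bigr => b _; apply: eq_bigr => c _; apply: eq_bigr => d _.
  by rewrite HH_ab.
rewrite E1 E2 E3 Tbc //; ring.
Qed.

Lemma Qsum n (e : rel 'I_n) (irr : irreflexive e) (sym : symmetric e) :
  \sum_(P in Qpairs e) Qterm e P = Ncnt e / 2%:R.
Proof.
pose G (E1 : {set 'I_n}) : rat := \sum_(E2 in edges e)
   (if [disjoint E1 & E2] then FF e E1 E2 else 0).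
have S1 : (\sum_(P in Qpairs e) Qterm e P) *+ 2 = \sum_(E1 in edges e) G E1.
  rewrite Qpairs_eq -sumrMnl (pair_sum (rQ_sym e) (rQ_irr e)).
  rewrite [RHS]big_mkcond /=. apply: eq_big => // E1 _.
  have -> : \sum_(E2 | rQ e E1 E2) Qterm e [set E1; E2] =
            \sum_(E2 | rQ e E1 E2) FF e E1 E2.
    apply: eq_bigr => E2 h; rewrite Qterm2 //.
    by apply: contraTneq h => ->; rewrite rQ_irr.
  rewrite /rQ; case: (E1 \in edges e) => /=; last by rewrite big_pred0.
  by rewrite big_mkcondr.
have S2 : (\sum_(E1 in edges e) G E1) *+ 2 =
   \sum_a \sum_(b | e a b) G [set a; b].
  by rewrite edges_pairs -sumrMnl (pair_sum sym irr).
have S3 : forall a b, G [set a; b] *+ 2 =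
   \sum_c \sum_(d | e c d) (if [disjoint [set a; b] & [set c; d]]
                            then FF e [set a; b] [set c; d] else 0).
  by move=> a b; rewrite /G edges_pairs -sumrMnl (pair_sum sym irr).
have S4 : (\sum_(P in Qpairs e) Qterm e P) *+ 8 = 4%:R * Ncnt e.
  rewrite -Q4 // (_ : 8 = 2 * 2 * 2)%N // !mulrnA S1 S2 -sumrMnl.
  apply: eq_bigr => a _; rewrite -sumrMnl big_mkcond; apply: eq_bigr => b _ /=.
  case eab : (e a b) => /=.
    rewrite S3; apply: eq_bigr => c _; rewrite big_mkcond; apply: eq_bigr => d _ /=.
    case ecd : (e c d) => /=; last by rewrite /HH eab ecd mul0r.
    rewrite disj2 /HH eab ecd /=.
    have nab : a != b by apply: contraTneq eab => ->; rewrite irr.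
    have ncd : c != d by apply: contraTneq ecd => ->; rewrite irr.
    case: ifP => _; last by rewrite mul0r.
    by rewrite mul1r /FF big_set2 // !big_set2 //; ring.
  symmetry; rewrite big1 // => c _; rewrite big1 // => d _.
  by rewrite /HH eab mul0r.
apply: (@mulIf _ 8%:R); first by [].
rewrite mulr_natr S4; by field.
Qed.
Definition i0 : 'I_4 := @Ordinal 4 0 isT.
Definition i1 : 'I_4 := @Ordinal 4 1 isT.
Definition i2 : 'I_4 := @Ordinal 4 2 isT.
Definition i3 : 'I_4 := @Ordinal 4 3 isT.

Lemma ord4 (u : 'I_4) : u = i0 \/ u = i1 \/ u = i2 \/ u = i3.
Proof.
case: u => [[|[|[|[|k]]]] h].
- by left; apply: val_inj.
- by right; left; apply: val_inj.
- by right; right; left; apply: val_inj.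
- by right; right; right; apply: val_inj.
- by [].
Qed.

Lemma aut4 (s : 'I_4 -> 'I_4) :
  (forall u v, L4_rel u v = L4_rel (s u) (s v)) ->
  (forall u, s u = u) \/ (forall u, s u = rev_ord u).
Proof.
move=> K.
move: (K i0 i1) (K i1 i2) (K i2 i3) (K i0 i2) (K i0 i3) (K i1 i3).
have [E0|[E0|[E0|E0]]] := ord4 (s i0); rewrite E0;
have [E1|[E1|[E1|E1]]] := ord4 (s i1); rewrite E1;
have [E2|[E2|[E2|E2]]] := ord4 (s i2); rewrite E2;
have [E3|[E3|[E3|E3]]] := ord4 (s i3); rewrite E3;
move=> h1 h2 h3 h4 h5 h6; try discriminate.
- by left => u; have [->|[->|[->|->]]] := ord4 u; rewrite ?E0 ?E1 ?E2 ?E3.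
- by right => u; have [->|[->|[->|->]]] := ord4 u; rewrite ?E0 ?E1 ?E2 ?E3; apply: val_inj.
Qed.

Definition Wb n (p : {set 'I_n} * {set {set 'I_n}}) (phi : {ffun 'I_4 -> 'I_n}) : bool :=
  injectiveb phi && (phi @: [set: 'I_4] == p.1) &&
  [forall u, forall v, L4_rel u v == ([set phi u; phi v] \in p.2)].

Lemma iso_toE n (p : {set 'I_n} * {set {set 'I_n}}) :
  iso_to L4_rel p = [exists phi, Wb p phi].
Proof. by []. Qed.

Definition pathf n (e : rel 'I_n) (phi : {ffun 'I_4 -> 'I_n}) : bool :=
  P4 e (phi i0) (phi i1) (phi i2) (phi i3).

Definition pmap n (phi : {ffun 'I_4 -> 'I_n}) : {set 'I_n} * {set {set 'I_n}} :=
  (phi @: [set: 'I_4],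
   [set E : {set 'I_n} | [exists u, exists v, L4_rel u v && (E == [set phi u; phi v])]]).

Lemma L4_sym u v : L4_rel u v = L4_rel v u.
Proof. by rewrite /L4_rel orbC. Qed.

Lemma L4_irr u : L4_rel u u = false.
Proof. by have [->|[->|[->|->]]] := ord4 u. Qed.

Lemma L4_rev u v : L4_rel (rev_ord u) (rev_ord v) = L4_rel u v.
Proof.
by have [->|[->|[->|->]]] := ord4 u; have [->|[->|[->|->]]] := ord4 v.
Qed.

Lemma path_edges n (e : rel 'I_n) (sym : symmetric e) phi :
  pathf e phi -> forall u v, L4_rel u v -> e (phi u) (phi v).
Proof.
rewrite /pathf /P4 => /and3P [h01 h12 /and4P [h23 _ _ _]] u v.
have [->|[->|[->|->]]] := ord4 u; have [->|[->|[->|->]]] := ord4 v;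
  rewrite /L4_rel //= => _; by rewrite ?h01 ?h12 ?h23 // sym ?h01 ?h12 ?h23.
Qed.

Lemma path_inj n (e : rel 'I_n) (irr : irreflexive e) phi :
  pathf e phi -> injective phi.
Proof.
rewrite /pathf /P4 => /and3P [h01 h12 /and4P [h23 n02 n03 n13]].
have n01 : phi i0 != phi i1 by apply: contraTneq h01 => ->; rewrite irr.
have n12 : phi i1 != phi i2 by apply: contraTneq h12 => ->; rewrite irr.
have n23 : phi i2 != phi i3 by apply: contraTneq h23 => ->; rewrite irr.
move=> u v; have [->|[->|[->|->]]] := ord4 u; have [->|[->|[->|->]]] := ord4 v;
  move=> E; first [reflexivity |
    by move: n01 n12 n23 n02 n03 n13; rewrite E eqxx ?andbF].
Qed.

Lemma edge_of n (e : rel 'I_n) (irr : irreflexive e) (sym : symmetric e) a b :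
  [set a; b] \in edges e -> e a b.
Proof.
rewrite inE => /existsP [s /existsP [t /andP [/eqP E est]]].
have nst : s != t by apply: contraTneq est => ->; rewrite irr.
by case: (set2_eqP nst E) => [[-> ->]|[-> ->]] //; rewrite sym.
Qed.

Lemma claimA n (e : rel 'I_n) (irr : irreflexive e) (sym : symmetric e) p phi :
  (is_subgraph e p && Wb p phi) = (pathf e phi && (p == pmap phi)).
Proof.
apply/idP/idP.
  case: p => [W Es].
  rewrite /is_subgraph /Wb /=.
  case/andP => /andP [sub fa] /andP [/andP [/injectiveP inj /eqP imW] Hl].
  have Hl' u v : L4_rel u v = ([set phi u; phi v] \in Es).
    by apply/eqP; move: Hl => /forallP /(_ u) /forallP /(_ v).
  have E_of u v : L4_rel u v -> e (phi u) (phi v).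
    by rewrite Hl' => /(subsetP sub) /(edge_of irr sym).
  apply/andP; split.
    rewrite /pathf /P4 (E_of i0 i1 isT) (E_of i1 i2 isT) (E_of i2 i3 isT).
    by rewrite !(inj_eq inj).
  apply/eqP; rewrite /pmap imW; congr pair.
  apply/setP => E; rewrite inE; apply/idP/idP.
    move=> hE; have := subsetP sub E hE.
    rewrite inE => /existsP [s /existsP [t /andP [/eqP ES est]]].
    move: fa => /forallP /(_ E) /implyP /(_ hE) /subsetP sW.
    have : s \in W by apply: sW; rewrite ES set21.
    have : t \in W by apply: sW; rewrite ES set22.
    rewrite -imW => /imsetP [v _ tv] /imsetP [u _ su].
    apply/existsP; exists u; apply/existsP; exists v.
    by rewrite Hl' -su -tv -ES hE eqxx.
  by case/existsP => u /existsP [v /andP [luv /eqP ->]]; rewrite -Hl'.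
case/andP => hp /eqP ->.
rewrite /is_subgraph /Wb /pmap /=.
apply/andP; split; first (apply/andP; split).
- apply/subsetP => E; rewrite inE => /existsP [u /existsP [v /andP [luv /eqP ->]]].
  rewrite inE; apply/existsP; exists (phi u); apply/existsP; exists (phi v).
  by rewrite eqxx (path_edges sym hp luv).
- apply/forallP => E; apply/implyP.
  rewrite inE => /existsP [u /existsP [v /andP [_ /eqP ->]]].
  by apply/subsetP => x /set2P [] ->; apply: imset_f.
apply/andP; split; first (apply/andP; split).
- by apply/injectiveP; apply: (path_inj irr hp).
- by [].
apply/forallP => u; apply/forallP => v; apply/eqP; rewrite inE; apply/idP/idP.
  by move=> luv; apply/existsP; exists u; apply/existsP; exists v; rewrite luv eqxx.
case/existsP => u' /existsP [v' /andP [luv' /eqP E]].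
have inj := path_inj irr hp.
have nuv' : u' != v' by apply: contraTneq luv' => ->; rewrite L4_irr.
have nphi : phi u' != phi v' by rewrite (inj_eq inj).
case: (set2_eqP nphi E) => [[/inj -> /inj ->]|[/inj -> /inj ->]] //.
by rewrite L4_sym.
Qed.

Lemma claimB n (p : {set 'I_n} * {set {set 'I_n}}) phi0 psi : Wb p phi0 ->
  Wb p psi = (psi == phi0) || (psi == [ffun u => phi0 (rev_ord u)]).
Proof.
case/andP => /andP [/injectiveP inj0 /eqP im0] Hl0.
have Hl0' u v : L4_rel u v = ([set phi0 u; phi0 v] \in p.2).
  by apply/eqP; move: Hl0 => /forallP /(_ u) /forallP /(_ v).
apply/idP/idP.
  case/andP => /andP [/injectiveP injp /eqP imp] Hl.
  have Hlp' u v : L4_rel u v = ([set psi u; psi v] \in p.2).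
    by apply/eqP; move: Hl => /forallP /(_ u) /forallP /(_ v).
  have ex u : exists v, psi u = phi0 v.
    have : psi u \in p.1 by rewrite -imp imset_f.
    by rewrite -im0 => /imsetP [v _ ->]; exists v.
  have [s Hs] := fin_all_exists ex.
  have K u v : L4_rel u v = L4_rel (s u) (s v) by rewrite Hlp' Hl0' !Hs.
  case: (aut4 K) => Hs'; apply/orP; [left|right]; apply/eqP/ffunP => u.
    by rewrite Hs Hs'.
  by rewrite Hs Hs' ffunE.
case/orP => /eqP ->; first by apply/andP; split; [apply/andP; split; [apply/injectiveP|apply/eqP]|].
apply/andP; split; first (apply/andP; split).
- apply/injectiveP => u v; rewrite !ffunE => /inj0; exact: rev_ord_inj.
- apply/eqP; rewrite -im0; apply/setP => x; apply/imsetP/imsetP => [[u _ ->]|[u _ ->]].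
    by exists (rev_ord u); rewrite ?ffunE.
  by exists (rev_ord u); rewrite ?ffunE ?rev_ordK.
apply/forallP => u; apply/forallP => v; rewrite !ffunE -Hl0' L4_rev.
exact: eqxx.
Qed.

Lemma sum_bool_card (T : finType) (P : pred T) : (\sum_x (P x : nat) = #|P|)%N.
Proof.
rewrite -sum1_card [RHS]big_mkcond /=; apply: eq_bigr => x _. by rewrite unfold_in; case: (P x). Qed.

Lemma fiber2 n (e : rel 'I_n) p :
  (\sum_(phi : {ffun 'I_4 -> 'I_n}) ((is_subgraph e p && Wb p phi) : nat)
   = 2 * (is_subgraph e p && iso_to L4_rel p))%N.
Proof.
rewrite iso_toE; case: (is_subgraph e p) => /=; last by rewrite big1.
case: (boolP [exists phi, Wb p phi]) => [/existsP [phi0 H0]|hn]; last first.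
  move/existsPn: hn => hn.
  by rewrite big1 // => phi _; rewrite (negbTE (hn phi)).
under eq_bigr => phi _ do rewrite (claimB phi H0).
rewrite (sum_bool_card (fun phi => (phi == phi0) || (phi == [ffun u => phi0 (rev_ord u)]))).
have -> : #|(fun phi => (phi == phi0) || (phi == [ffun u => phi0 (rev_ord u)]))| =
          #|[set phi0; [ffun u => phi0 (rev_ord u)]]|.
  by apply: eq_card => phi; rewrite !inE.
rewrite cards2.
case/andP: H0 => /andP [/injectiveP inj0 _] _.
have -> : phi0 != [ffun u => phi0 (rev_ord u)].
  apply/negP => /eqP /ffunP /(_ i0); rewrite ffunE => /inj0 E.
  by move: (congr1 val E).
by [].
Qed.

Lemma reindex4 n (G : 'I_n -> 'I_n -> 'I_n -> 'I_n -> rat) :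
  \sum_(phi : {ffun 'I_4 -> 'I_n}) G (phi i0) (phi i1) (phi i2) (phi i3) =
  \sum_a \sum_b \sum_c \sum_d G a b c d.
Proof.
symmetry.
under eq_bigr => a _ do under eq_bigr => b _ do rewrite pair_big /=.
under eq_bigr => a _ do rewrite pair_big /=.
rewrite pair_big /=.
pose h (phi : {ffun 'I_4 -> 'I_n}) := (phi i0, (phi i1, (phi i2, phi i3))).
pose g (x : 'I_n * ('I_n * ('I_n * 'I_n))) : {ffun 'I_4 -> 'I_n} :=
  [ffun u : 'I_4 => nth x.1 [:: x.1; x.2.1; x.2.2.1; x.2.2.2] u].
rewrite (reindex h) /=; last first.
  apply: onW_bij; exists g.
    move=> phi; apply/ffunP => u; rewrite ffunE.
    by have [->|[->|[->|->]]] := ord4 u.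
  by move=> [a [b [c d]]]; rewrite /h /g !ffunE.
by [].
Qed.

Lemma nG_count n (e : rel 'I_n) (irr : irreflexive e) (sym : symmetric e) :
  (nG e L4_rel)%:R * 2%:R = Ncnt e.
Proof.
have H : (2 * nG e L4_rel = \sum_(phi : {ffun 'I_4 -> 'I_n}) (pathf e phi : nat))%N.
  rewrite /nG -sum1_card big_mkcond /= big_distrr /=.
  have -> : \sum_(p : {set 'I_n} * {set {set 'I_n}})
        (2 * (if p \in [set p | is_subgraph e p && iso_to L4_rel p] then 1 else 0))%N =
      \sum_(p : {set 'I_n} * {set {set 'I_n}})
        \sum_(phi : {ffun 'I_4 -> 'I_n}) ((is_subgraph e p && Wb p phi) : nat).
    apply: eq_bigr => p _; rewrite fiber2 inE.
    by case: (is_subgraph e p && iso_to L4_rel p).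
  rewrite exchange_big; apply: eq_bigr => phi _.
  under eq_bigr => p _ do rewrite claimA //.
  rewrite (bigD1 (pmap phi)) //= eqxx andbT big1 ?addn0 ?addr0 // => p /negbTE ->.
  by rewrite andbF.
rewrite mulrC -natrM H natr_sum.
rewrite /Ncnt -(reindex4 (fun a b c d => ((P4 e a b c d : nat))%:R)).
by [].
Qed.

Unset Implicit Arguments.

Theorem proposition1 (n : nat) (e : rel 'I_n) :
  simple_graph e ->
  let A := adj e in
  let k := deg e in
  [/\ (nG e L4_rel)%:R = \sum_(P in Qpairs e) Qterm e P,
      \sum_(P in Qpairs e) Qterm e P =
        2%:R^-1 * \sum_(s : 'I_n) \sum_(t : 'I_n | t != s)
           ((A ^+ 3) s t - A s t * (2%:R * (k t)%:R - 1))
    & 2%:R^-1 * \sum_(s : 'I_n) \sum_(t : 'I_n | t != s)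
           ((A ^+ 3) s t - A s t * (2%:R * (k t)%:R - 1))
        = m_p e 3 + m_p e 1 - n%:R * avg_k2 e].
Proof.
move=> [irr sym] A k; rewrite {}/A {}/k.
split.
- rewrite Qsum // -(nG_count irr sym); by field.
- by rewrite Qsum // part3 // mulrC.
- exact: part4.
Qed.
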